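(* Consider an instance of the max-min fair curriculum-based course timetabling (MMF-CB-CTT) problem with set of courses $C$, set of rooms $R$, set of periods $P$ and curricula $U\subseteq\mathcal{P}(C)$. Fix a period $p\in P$ and a feasible timetable in which the set $C_p$ of courses scheduled in $p$ is fixed, and everything except the rooms of the courses in $C_p$ is fixed; assume (adding dummy courses or dummy rooms if necessary) $|C_p|=|R|$. For $e\in C_p$ let $U_e=\{u\in U: e\in u\}$, and for $r\in R$ and $u\in U_e$ let $c_{e\to r}(u)$ denote the penalty $c(u,\tau)$ of curriculum $u$ in the completed timetable $\tau$ when $e$ is assigned to room $r$. Then the problem of choosing the room assignment for the courses of $C_p$ so that the resulting allocation vector is max-min fair (among all room assignments for period $p$ with the rest fixed) is equivalent to the GLBOP whose ground set is the edge set $E=\{\{e,r\}: e\in C_p, r\in R\}$ of the complete bipartite graph on $C_p\cup R$, whose feasible solutions are the perfect matchings of this graph, and whose weights are the multisets $w(e,r)=\biguplus_{u\in U_e}\{c_{e\to r}(u)\}$; i.e. the room assignment subproblem is $$\min_{\preceq}\ \biguplus_{\{e,r\}\in S} w(e,r)\quad\text{s.t. } S \text{ a perfect matching}.$$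
   Context: CB-CTT: courses consist of events to be assigned to resources (period, room); each curriculum is a set of courses no two of which may be taught in the same period (hard constraint), so each curriculum contains at most one course of $C_p$. The penalty $c(u,\tau)=\sum_{i=1}^4 c_{Si}(u,\tau)$ of curriculum $u$ in timetable $\tau$ is the CB-CTT objective (sum of weighted penalties for soft constraints RoomCapacity, MinWorkingDays, IsolatedLectures, RoomStability) restricted to events of courses in $u$. The allocation vector of $\tau$ is $A(\tau)=(c(u_1,\tau),\dots,c(u_k,\tau))$ for curricula $u_1,\dots,u_k$; $\tau$ is max-min fair if $A(\tau)$ sorted non-increasingly is lexicographically minimal among feasible timetables. GLBOP and the comparison $\preceq$ of multisets: sort the multisets non-increasingly and compare the sequences lexicographically, where a proper prefix is smaller; the GLBOP asks for a feasible solution $S$ minimizing $\biguplus_{e\in S}w(e)$ with respect to $\preceq$. *)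

(* Defs.v *)
From mathcomp Require Import all_boot.
Set Implicit Arguments. Unset Strict Implicit. Unset Printing Implicit Defensive.

(* An instance of CB-CTT: courses, rooms, periods, events (= lectures). *)
Record instance (Course Room Period Event : finType) := Instance {
  course_of : Event -> Course;
  students  : Course -> nat;
  min_days  : Course -> nat;
  teacher   : Course -> nat;
  available : Course -> Period -> bool;
  capacity  : Room -> nat;
  day_of    : Period -> nat;
  slot_of   : Period -> nat;
  curricula : {set {set Course}};
  wRC : nat; wMWD : nat; wIL : nat; wRS : nat
}.

Section CBCTT.
Variables (Course Room Period Event : finType).
Variable I : instance Course Room Period Event.

Definition timetable := Event -> Period * Room.

Definition adjacent (q q' : Period) : bool :=
  (day_of I q == day_of I q') &&
  (((slot_of I q).+1 == slot_of I q') || ((slot_of I q').+1 == slot_of I q)).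

Definition feasible (tau : timetable) : Prop :=
  (forall ev ev', ev != ev' -> course_of I ev = course_of I ev' -> (tau ev).1 != (tau ev').1) /\
  (forall ev ev', ev != ev' -> tau ev != tau ev') /\
  (forall ev ev', course_of I ev != course_of I ev' ->
     ((exists2 u, u \in curricula I & (course_of I ev \in u) && (course_of I ev' \in u))
      \/ teacher I (course_of I ev) = teacher I (course_of I ev')) ->
     (tau ev).1 != (tau ev').1) /\
  (forall ev, available I (course_of I ev) (tau ev).1).

Definition pen_RC (u : {set Course}) (tau : timetable) : nat :=
  \sum_(ev | course_of I ev \in u) (students I (course_of I ev) - capacity I (tau ev).2).

Definition pen_MWD (u : {set Course}) (tau : timetable) : nat :=
  \sum_(c in u) (min_days I c -
     size (undup [seq day_of I (tau ev).1 | ev <- enum Event & course_of I ev == c])).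

Definition pen_IL (u : {set Course}) (tau : timetable) : nat :=
  \sum_(ev | course_of I ev \in u)
     ~~ [exists ev', (course_of I ev' \in u) && adjacent (tau ev).1 (tau ev').1].

Definition pen_RS (u : {set Course}) (tau : timetable) : nat :=
  \sum_(c in u) (#|[set (tau ev).2 | ev in [pred ev | course_of I ev == c]]| - 1).

Definition penalty (u : {set Course}) (tau : timetable) : nat :=
  wRC I * pen_RC u tau + wMWD I * pen_MWD u tau + wIL I * pen_IL u tau + wRS I * pen_RS u tau.

(* Allocation vector A(tau), as a multiset (a seq up to permutation). *)
Definition alloc (tau : timetable) : seq nat :=
  [seq penalty u tau | u <- enum (curricula I)].

End CBCTT.

Fixpoint lexle (s t : seq nat) : bool :=
  match s, t with
  | [::], _ => true
  | _ :: _, [::] => false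
  | x :: s', y :: t' => (x < y) || ((x == y) && lexle s' t')
  end.

Definition msle (s t : seq nat) : bool := lexle (sort geq s) (sort geq t).

Section Subproblem.
Variables (Course Room Period Event : finType).
Variable I : instance Course Room Period Event.
Variables (tau0 : timetable Room Period Event) (p : Period).

Definition Cp : {set Course} :=
  [set course_of I ev | ev in [pred ev | (tau0 ev).1 == p]].

Definition room_reassignment (tau : timetable Room Period Event) : Prop :=
  feasible I tau /\
  (forall ev, (tau ev).1 = (tau0 ev).1) /\
  (forall ev, (tau0 ev).1 != p -> tau ev = tau0 ev).

Definition max_min_fair (tau : timetable Room Period Event) : Prop :=
  room_reassignment tau /\
  forall tau', room_reassignment tau' -> msle (alloc I tau) (alloc I tau').

Definition matching_of (tau : timetable Room Period Event) : {set Course * Room} :=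
  [set (course_of I ev, (tau ev).2) | ev in [pred ev | (tau ev).1 == p]].

Definition perfect_matching (S : {set Course * Room}) : Prop :=
  (forall x, x \in S -> x.1 \in Cp) /\
  (forall e, e \in Cp -> #|[set x in S | x.1 == e]| = 1) /\
  (forall r : Room, #|[set x in S | x.2 == r]| = 1).

Definition assign (e : Course) (r : Room) : timetable Room Period Event :=
  fun ev => if ((tau0 ev).1 == p) && (course_of I ev == e) then (p, r) else tau0 ev.

Definition U_of (e : Course) : {set {set Course}} := [set u in curricula I | e \in u].

Definition weight (e : Course) (r : Room) : seq nat :=
  [seq penalty I u (assign e r) | u <- enum (U_of e)].

Definition total_weight (S : {set Course * Room}) : seq nat :=
  flatten [seq weight x.1 x.2 | x <- enum S].

Definition glbop_optimal (S : {set Course * Room}) : Prop :=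
  perfect_matching S /\
  forall S', perfect_matching S' -> msle (total_weight S) (total_weight S').

End Subproblem.

(* Main.v *)
Require Import Defs.
From mathcomp Require Import all_boot.
Set Implicit Arguments. Unset Strict Implicit. Unset Printing Implicit Defensive.

Fixpoint ins (k : nat) (s : seq nat) : seq nat :=
  match s with
  | [::] => [:: k]
  | x :: s' => if x <= k then k :: s else x :: ins k s'
  end.

Lemma geq_total : total geq. Proof. by move=> m n; apply: leq_total. Qed.
Lemma geq_trans : transitive geq.
Proof. by move=> y x z /= h1 h2; exact: leq_trans h2 h1. Qed.
Lemma geq_anti : antisymmetric geq.
Proof. move=> x y /andP[h1 h2]; apply: anti_leq; apply/andP; split; [exact: h2|exact: h1]. Qed.

Lemma perm_ins k s : perm_eq (ins k s) (k :: s).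
Proof.
elim: s => [|x s IH] //=. case: ifP => _ //.
have IH' := IH; rewrite -(perm_cons x) in IH'.
apply: perm_trans IH' _. by rewrite -[x :: k :: s]/([:: x] ++ [:: k] ++ s) perm_catCA.
Qed.

Lemma path_ins a k s : path geq a s -> k <= a -> path geq a (ins k s).
Proof.
elim: s a => [|x s IH] a /=; first by move=> _ ka; rewrite /= ka.
move=> /andP[ax ps] ka. case: ifP => xk /=.
  by rewrite ka xk ps.
rewrite ax /=. apply: IH => //. by apply: ltnW; rewrite ltnNge xk.
Qed.

Lemma sorted_ins k s : sorted geq s -> sorted geq (ins k s).
Proof.
case: s => [|x s] //= ps. case: ifP => xk /=; first by rewrite xk ps.
apply: path_ins => //. by apply: ltnW; rewrite ltnNge xk.
Qed.

Lemma sort_cons k s : sort geq (k :: s) = ins k (sort geq s).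
Proof.
rewrite -[RHS](sorted_sort geq_trans); last by apply: sorted_ins; exact: sort_sorted geq_total _.
apply/perm_sortP; [exact: geq_total|exact: geq_trans|exact: geq_anti|].
rewrite perm_sym; apply: perm_trans (perm_ins _ _) _.
by rewrite perm_cons perm_sort.
Qed.

Lemma lexle_ins k s t : size s = size t -> lexle (ins k s) (ins k t) = lexle s t.
Proof.
elim: s t => [|x s IH] [|y t] //=; first by rewrite ltnn eqxx.
move=> [st].
case: ifP => xk; case: ifP => yk /=.
- by rewrite ltnn eqxx.
- have ky : k < y by rewrite ltnNge yk.
  by rewrite ky (leq_ltn_trans xk ky).
- have kx : k < x by rewrite ltnNge xk.
  have yx : y < x := leq_ltn_trans yk kx.
  by rewrite ltnNge (ltnW kx) (gtn_eqF kx) ltnNge (ltnW yx) (gtn_eqF yx).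
- by rewrite IH.
Qed.

Lemma msle_perm s s' t t' : perm_eq s s' -> perm_eq t t' -> msle s t = msle s' t'.
Proof.
move=> h1 h2; rewrite /msle.
by rewrite (perm_sortP geq_total geq_trans geq_anti _ _ h1)
           (perm_sortP geq_total geq_trans geq_anti _ _ h2).
Qed.

Lemma msle_cat K A B : size A = size B -> msle (K ++ A) (K ++ B) = msle A B.
Proof.
move=> sAB; elim: K => [|k K IH] //=.
rewrite /msle !sort_cons lexle_ins ?size_sort ?size_cat ?sAB //.
Qed.

Section CTT.
Variables (Course Room Period Event : finType).
Variable I : instance Course Room Period Event.
Variables (tau0 : timetable Room Period Event) (p : Period).
Hypothesis F0 : feasible I tau0.

Local Notation CP := (Cp I tau0 p).
Local Notation M := (matching_of I p).
Local Notation RR := (room_reassignment I tau0 p).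

Lemma pen_local (u : {set Course}) (t t' : timetable Room Period Event) :
  (forall ev, course_of I ev \in u -> t ev = t' ev) -> penalty I u t = penalty I u t'.
Proof.
move=> H; rewrite /penalty /pen_RC /pen_MWD /pen_IL /pen_RS.
congr (_ + _ + _ + _); congr (_ * _).
- by apply: eq_bigr => ev Hev; rewrite H.
- apply: eq_bigr => c Hc; congr (_ - size (undup _)).
  apply/eq_in_map => ev; rewrite mem_filter => /andP[/eqP Hc' _].
  by rewrite H // Hc'.
- apply: eq_bigr => ev Hev; congr (~~ _); apply: eq_existsb => ev'.
  case Hev': (course_of I ev' \in u) => //=. by rewrite !H.
- apply: eq_bigr => c Hc; congr (#|_| - 1); congr pred_of_set;
  apply: eq_in_imset => ev; rewrite inE => /eqP Hc'.
  by rewrite H // Hc'.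
Qed.

Lemma in_Cp ev : (tau0 ev).1 == p -> course_of I ev \in CP.
Proof. by move=> h; apply: imset_f. Qed.

Lemma Cp_inv e : e \in CP -> exists2 ev, (tau0 ev).1 == p & e = course_of I ev.
Proof. by case/imsetP => ev; rewrite inE => h ->; exists ev. Qed.

Lemma feas_uniq (t : timetable Room Period Event) ev ev' : feasible I t ->
  (t ev).1 = (t ev').1 -> course_of I ev = course_of I ev' -> ev = ev'.
Proof.
move=> [H _] h1 h2; apply/eqP; apply: contraTT (eqxx (t ev).1) => ne.
by rewrite {2}h1; apply: H.
Qed.

Lemma one_curr (u : {set Course}) c c' : u \in curricula I -> c \in CP -> c' \in CP ->
  c \in u -> c' \in u -> c = c'.
Proof.
move=> Hu /Cp_inv [ev hev ->] /Cp_inv [ev' hev' ->] h h'.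
apply/eqP; apply: contraTT (eqxx p) => ne.
have [_ [_ [H _]]] := F0.
have := H ev ev' ne (or_introl (ex_intro2 _ _ u Hu (introT andP (conj h h')))).
by rewrite (eqP hev) (eqP hev').
Qed.

Lemma RR_per tau ev : RR tau -> (tau ev).1 = (tau0 ev).1.
Proof. by case=> _ []. Qed.

Lemma RR_out tau ev : RR tau -> (tau0 ev).1 != p -> tau ev = tau0 ev.
Proof. by case=> _ [] _; apply. Qed.

Lemma inM tau x : RR tau -> x \in M tau ->
  exists2 ev, (tau0 ev).1 == p & x = (course_of I ev, (tau ev).2).
Proof.
move=> HR /imsetP [ev]; rewrite inE => h ->; exists ev => //.
by rewrite -(RR_per ev HR).
Qed.

Lemma Min tau ev : RR tau -> (tau0 ev).1 == p -> (course_of I ev, (tau ev).2) \in M tau.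
Proof. by move=> HR h; apply: imset_f; rewrite inE (RR_per ev HR). Qed.

Lemma ev_same tau ev ev' : RR tau -> (tau0 ev).1 == p -> (tau0 ev').1 == p ->
  course_of I ev = course_of I ev' -> ev = ev'.
Proof.
move=> HR h h' hc; apply: (feas_uniq (t := tau)) => //; first by case: HR.
by rewrite !(RR_per _ HR) (eqP h) (eqP h').
Qed.

Lemma M1 tau x y : RR tau -> x \in M tau -> y \in M tau -> x.1 = y.1 -> x = y.
Proof.
move=> HR /(inM HR) [ev h ->] /(inM HR) [ev' h' ->] /= hc.
by rewrite (ev_same HR h h' hc).
Qed.

Lemma M_Cp tau x : RR tau -> x \in M tau -> x.1 \in CP.
Proof. by move=> HR /(inM HR) [ev h ->]; apply: in_Cp. Qed.

Lemma assign_ok tau (u : {set Course}) x : RR tau -> u \in curricula I -> x \in M tau -> x.1 \in u ->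
  penalty I u (assign I tau0 p x.1 x.2) = penalty I u tau.
Proof.
move=> HR Hu Hx Hxu; apply: pen_local => ev Hev; rewrite /assign.
case Hp: ((tau0 ev).1 == p) => /=; last by rewrite (RR_out HR) // Hp.
case Hc: (course_of I ev == x.1).
  move: Hx => /(inM HR) [ev' h' Ex]; rewrite Ex /= in Hc.
  have E : ev = ev' by apply: (ev_same HR Hp h' (eqP Hc)).
  have e1 : (tau ev).1 = p by rewrite (RR_per _ HR) (eqP Hp).
  rewrite Ex /= -E; move: e1; by case: (tau ev) => ? ? /= ->.
have := one_curr Hu (in_Cp Hp) (M_Cp HR Hx) Hev Hxu.
by move/eqP; rewrite Hc.
Qed.

Definition Pm (u : {set Course}) := [exists e, (e \in CP) && (e \in u)].

Definition K := [seq penalty I u tau0 | u <- [seq u <- enum (curricula I) | ~~ Pm u]].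

Lemma uniq_flat tau (s : seq (Course * Room)) : RR tau -> uniq s -> {subset s <= M tau} ->
  uniq (flatten [seq enum (U_of I x.1) | x <- s]).
Proof.
move=> HR; elim: s => [|x s IH] //= /andP[xs us] sub.
rewrite cat_uniq enum_uniq IH ?us //; last by move=> y ys; apply: sub; rewrite inE ys orbT.
rewrite andbT; apply/hasPn => u /flattenP [l /mapP [y ys ->] uy].
rewrite mem_enum; apply: contra xs; rewrite !inE => /andP[Hu hx].
move: uy; rewrite mem_enum inE => /andP[_ hy].
have Mx : x \in M tau by apply: sub; rewrite inE eqxx.
have My : y \in M tau by apply: sub; rewrite inE ys orbT.
have := one_curr Hu (M_Cp HR Mx) (M_Cp HR My) hx hy.
by move/(M1 HR Mx My) => ->.
Qed.

Lemma alloc_perm tau : RR tau ->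
  perm_eq (alloc I tau) (K ++ total_weight I tau0 p (M tau)).
Proof.
move=> HR.
have h1 : perm_eq (alloc I tau)
   ([seq penalty I u tau | u <- [seq u <- enum (curricula I) | ~~ Pm u]] ++
    [seq penalty I u tau | u <- [seq u <- enum (curricula I) | Pm u]]).
  rewrite -map_cat; apply: perm_map.
  by rewrite perm_sym perm_catC (perm_filterC Pm).
apply: perm_trans h1 _; apply: perm_cat.
  have -> : [seq penalty I u tau | u <- [seq u <- enum (curricula I) | ~~ Pm u]] = K.
    apply/eq_in_map => u; rewrite mem_filter => /andP[nP Hu]; apply: pen_local => ev hev.
    apply: RR_out HR _; apply: contra nP => h; apply/existsP; exists (course_of I ev).
    by rewrite in_Cp.
  exact: perm_refl.
have -> : total_weight I tau0 p (M tau) =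
   [seq penalty I u tau | u <- flatten [seq enum (U_of I x.1) | x <- enum (M tau)]].
  rewrite map_flatten /total_weight -map_comp; congr flatten.
  apply/eq_in_map => x; rewrite mem_enum => Hx /=.
  rewrite /weight; apply/eq_in_map => u; rewrite mem_enum inE => /andP[Hu hxu].
  exact: assign_ok.
apply: perm_map; apply: uniq_perm.
- by rewrite filter_uniq ?enum_uniq.
- by apply: uniq_flat HR (enum_uniq _) _ => x; rewrite mem_enum.
move=> u; rewrite mem_filter mem_enum; apply/idP/idP.
  move=> /andP[/existsP [e /andP[eC eu]] Hu].
  case: (Cp_inv eC) => ev hev Ee.
  have Hx := Min HR hev.
  apply/flattenP; exists (enum (U_of I (course_of I ev))).
    by apply/mapP; exists (course_of I ev, (tau ev).2); rewrite ?mem_enum.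
  by rewrite mem_enum inE Hu /= -Ee.
move=> /flattenP [l /mapP [x Hx ->]]; rewrite mem_enum inE => /andP[Hu hx].
rewrite Hu andbT; apply/existsP; exists x.1; rewrite hx andbT.
by apply: M_Cp HR _; rewrite -mem_enum.
Qed.

Lemma size_tw tau tau' : RR tau -> RR tau' ->
  size (total_weight I tau0 p (M tau)) = size (total_weight I tau0 p (M tau')).
Proof.
move=> H H'; have := perm_size (alloc_perm H); have := perm_size (alloc_perm H').
rewrite !size_cat /alloc !size_map => -> /eqP; rewrite eqn_add2l => /eqP.
by [].
Qed.

Lemma alloc_tw tau tau' : RR tau -> RR tau' ->
  msle (alloc I tau) (alloc I tau') =
  msle (total_weight I tau0 p (M tau)) (total_weight I tau0 p (M tau')).
Proof.
move=> H H'; rewrite (msle_perm (alloc_perm H) (alloc_perm H')).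
by rewrite msle_cat // (size_tw H H').
Qed.

End CTT.

Section CTT2.
Variables (Course Room Period Event : finType).
Variable I : instance Course Room Period Event.
Variables (tau0 : timetable Room Period Event) (p : Period).
Hypothesis F0 : feasible I tau0.
Hypothesis cardCp : #|Cp I tau0 p| = #|Room|.

Local Notation CP := (Cp I tau0 p).
Local Notation M := (matching_of I p).
Local Notation RR := (room_reassignment I tau0 p).

Lemma ev_room tau ev ev' : RR tau -> (tau0 ev).1 == p -> (tau0 ev').1 == p ->
  (tau ev).2 = (tau ev').2 -> ev = ev'.
Proof.
move=> HR h h' h2; case: (eqVneq ev ev') => // ne.
have [[_ [Hr _]] _] := HR.
have E : tau ev = tau ev'.
  rewrite (surjective_pairing (tau ev)) (surjective_pairing (tau ev')).
  by rewrite h2 !(RR_per _ HR) (eqP h) (eqP h').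
by move: (Hr _ _ ne); rewrite E eqxx.
Qed.

Lemma perfect tau : RR tau -> perfect_matching I tau0 p (M tau).
Proof.
move=> HR; split; first by move=> x; apply: M_Cp HR.
split.
  move=> e /Cp_inv [ev hev Ee]; apply/eqP/cards1P; exists (e, (tau ev).2).
  apply/setP => x; rewrite !inE; apply/andP/eqP.
    move=> [Hx /eqP hx]; rewrite Ee.
    by apply: (M1 HR Hx (Min HR hev)); rewrite hx Ee.
  by move=> ->; rewrite Ee (Min HR hev) /= eqxx.
move=> r.
pose D := [pred ev | (tau0 ev).1 == p].
have cD : #|[set (tau ev).2 | ev in D]| = #|Room|.
  rewrite card_in_imset; last first.
    by move=> ev ev'; rewrite !inE => h h'; apply: ev_room.
  rewrite -cardCp /Cp card_in_imset //.
  move=> ev ev'; rewrite !inE => h h' hc; apply: (feas_uniq F0) hc.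
  by rewrite (eqP h) (eqP h').
have : r \in [set (tau ev).2 | ev in D].
  have E : [set (tau ev).2 | ev in D] = [set: Room].
    apply/eqP; rewrite eqEcard subsetT. by rewrite /= cardsT cD.
  by rewrite E inE.
case/imsetP => ev; rewrite inE => hev ->.
apply/eqP/cards1P; exists (course_of I ev, (tau ev).2).
apply/setP => x; rewrite !inE; apply/andP/eqP.
  move=> [/(inM HR) [ev' h' ->] /eqP /= hr].
  by rewrite (ev_room HR h' hev hr).
by move=> ->; rewrite (Min HR hev) /= eqxx.
Qed.

Lemma from_matching S : perfect_matching I tau0 p S ->
  exists2 tau, RR tau & M tau = S.
Proof.
move=> [HS1 [HS2 HS3]].
have one1 : forall x y, x \in S -> y \in S -> x.1 = y.1 -> x = y.
  move=> x y xS yS e; have /eqP/cards1P [z Hz] := HS2 _ (HS1 _ xS).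
  have : x \in [set x0 in S | x0.1 == x.1] by rewrite inE xS eqxx.
  have : y \in [set x0 in S | x0.1 == x.1] by rewrite inE yS e eqxx.
  by rewrite Hz !inE => /eqP -> /eqP ->.
have one2 : forall x y, x \in S -> y \in S -> x.2 = y.2 -> x = y.
  move=> x y xS yS e; have /eqP/cards1P [z Hz] := HS3 x.2.
  have : x \in [set x0 in S | x0.2 == x.2] by rewrite inE xS eqxx.
  have : y \in [set x0 in S | x0.2 == x.2] by rewrite inE yS e eqxx.
  by rewrite Hz !inE => /eqP -> /eqP ->.
pose rm ev := if [pick x in S | x.1 == course_of I ev] is Some x then x.2 else (tau0 ev).2.
have rm_spec : forall ev, (tau0 ev).1 == p -> (course_of I ev, rm ev) \in S.
  move=> ev hev; rewrite /rm; case: pickP => [x /andP[xS /eqP xe]|none].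
    by case: x xe xS => a b /= <-.
  have /eqP/cards1P [z Hz] := HS2 _ (in_Cp I hev).
  have : z \in [set x0 in S | x0.1 == course_of I ev] by rewrite Hz inE.
  by rewrite inE none.
pose tau ev := if (tau0 ev).1 == p then ((tau0 ev).1, rm ev) else tau0 ev.
have per : forall ev, (tau ev).1 = (tau0 ev).1 by move=> ev; rewrite /tau; case: ifP.
have tin : forall ev, (tau0 ev).1 == p -> tau ev = ((tau0 ev).1, rm ev).
  by move=> ev h; rewrite /tau h.
have tout : forall ev, (tau0 ev).1 != p -> tau ev = tau0 ev.
  by move=> ev h; rewrite /tau (negbTE h).
have [G1 [G2 [G3 G4]]] := F0.
have HR : RR tau.
  split; last by split => // ev; apply: tout.
  split; first by move=> ev ev'; rewrite !per; apply: G1.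
  split.
    move=> ev ev' ne; apply/negP => /eqP E.
    have P1 := congr1 fst E; rewrite !per in P1.
    case hp: ((tau0 ev).1 == p).
      have hp' : (tau0 ev').1 == p by rewrite -P1.
      have P2 := congr1 snd E; rewrite (tin _ hp) (tin _ hp') /= in P2.
      have := one2 _ _ (rm_spec _ hp) (rm_spec _ hp') P2.
      case=> hc; move: ne; rewrite (feas_uniq F0 P1 hc) eqxx //.
    have hp' : (tau0 ev').1 != p by rewrite -P1 hp.
    move: E; rewrite (tout _ (negbT hp)) (tout _ hp') => E.
    by move: (G2 _ _ ne); rewrite E eqxx.
  split; first by move=> ev ev'; rewrite !per; apply: G3.
  by move=> ev; rewrite per.
exists tau => //.
apply/setP => x; apply/idP/idP.
  case/imsetP => ev; rewrite inE per => hev ->.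
  by rewrite tin //=; apply: rm_spec.
move=> xS; case: (Cp_inv (HS1 _ xS)) => ev hev Ee.
have -> : x = (course_of I ev, rm ev) by apply: one1 => //; apply: rm_spec.
by apply/imsetP; exists ev; rewrite ?inE ?per ?tin.
Qed.

End CTT2.

Theorem theorem2 (Course Room Period Event : finType)
  (I : instance Course Room Period Event)
  (tau0 : timetable Room Period Event) (p : Period) :
  feasible I tau0 ->
  #|Cp I tau0 p| = #|Room| ->
  (forall tau, room_reassignment I tau0 p tau ->
     perfect_matching I tau0 p (matching_of I p tau)) /\
  (forall S, perfect_matching I tau0 p S ->
     exists2 tau, room_reassignment I tau0 p tau & matching_of I p tau = S) /\
  (forall tau, room_reassignment I tau0 p tau ->
     (max_min_fair I tau0 p tau <-> glbop_optimal I tau0 p (matching_of I p tau))).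
Proof.
move=> F0 cC; split; first by move=> tau; apply: perfect.
split; first by move=> S; apply: from_matching.
move=> tau HR; split.
  move=> [_ Hopt]; split; first exact: perfect.
  move=> S' HS'; case: (from_matching F0 HS') => tau' HR' <-.
  rewrite -(alloc_tw F0 HR HR'); exact: Hopt.
move=> [_ Hopt]; split => // tau' HR'.
rewrite (alloc_tw F0 HR HR'); apply: Hopt; exact: perfect.
Qed.
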